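(* Let $G$ be a finite group such that the cyclic graph $\Delta(G)$ is connected and $\mathrm{diam}(\Delta(G))>6$. Then the center $Z(G)$ is trivial.
   Context: For a finite group $G$, the cyclic graph $\Delta(G)$ has vertex set $G^{\#}=G\setminus\{1\}$, and distinct vertices $x,y$ are adjacent if and only if the subgroup $\langle x,y\rangle$ is cyclic. The diameter is the maximum graph distance between two vertices. *)

(* Defs.v *)
From mathcomp Require Import all_boot all_fingroup all_solvable center.
Set Implicit Arguments. Unset Strict Implicit. Unset Printing Implicit Defensive.
Local Open Scope group_scope.

Definition cyc_adj (gT : finGroupType) (G : {set gT}) : rel gT :=
  fun x y => [&& x \in G^#, y \in G^#, x != y & cyclic <<[set x; y]>>].

Definition cyc_dist_le (gT : finGroupType) (G : {set gT}) (n : nat) (x y : gT) : Prop :=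
  exists p : seq gT, [/\ path (cyc_adj G) x p, last x p = y & size p <= n]%N.

Definition cyc_graph_connected (gT : finGroupType) (G : {set gT}) : Prop :=
  forall x y, x \in G^# -> y \in G^# -> exists n, cyc_dist_le G n x y.

Definition cyc_diam_gt (gT : finGroupType) (G : {set gT}) (n : nat) : Prop :=
  exists x y, [/\ x \in G^#, y \in G^# & ~ cyc_dist_le G n x y].

(* Main.v *)
Require Import Defs.
From mathcomp Require Import all_boot all_fingroup all_solvable center.

Section Helpers.
Set Implicit Arguments. Unset Strict Implicit.
Local Open Scope group_scope.
Variables (gT : finGroupType) (G : {group gT}).

Lemma dist_cat m n x y z :
  cyc_dist_le G m x y -> cyc_dist_le G n y z -> cyc_dist_le G (m + n) x z.
Proof.
move=> [p [pp lp sp]] [q [pq lq sq]]; exists (p ++ q); split.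
- by rewrite cat_path pp lp.
- by rewrite last_cat lp.
- by rewrite size_cat leq_add.
Qed.

Lemma dist_mono m n x y : (m <= n)%N -> cyc_dist_le G m x y -> cyc_dist_le G n x y.
Proof. by move=> mn [p [pp lp sp]]; exists p; split => //; apply: leq_trans mn. Qed.

Lemma dist0 x : cyc_dist_le G 0 x x.
Proof. by exists [::]. Qed.

Lemma dist_cyc (K : {group gT}) u v : u \in G^# -> v \in G^# -> cyclic K ->
  u \in K -> v \in K -> cyc_dist_le G 1 u v.
Proof.
move=> uG vG cK uK vK; have [->|nuv] := eqVneq u v; first exact: dist_mono (dist0 v).
exists [:: v]; split => //=; rewrite andbT /cyc_adj uG vG nuv /=.
apply: cyclicS cK; rewrite gen_subG; apply/subsetP => t; rewrite !inE.
by case/orP => /eqP ->.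
Qed.

Lemma adj_dist u v : cyc_adj G u v -> cyc_dist_le G 1 u v.
Proof.
case/and4P => uG vG _ cuv; apply: (@dist_cyc <<[set u; v]>>%G _ _ uG vG cuv).
  by rewrite mem_gen // !inE eqxx.
by rewrite mem_gen // !inE eqxx orbT.
Qed.

Lemma adj_sym u v : cyc_adj G u v -> cyc_adj G v u.
Proof.
case/and4P => uG vG nuv cuv; rewrite /cyc_adj vG uG eq_sym nuv /=.
by rewrite setUC.
Qed.

Lemma dist_sym n x y : cyc_dist_le G n x y -> cyc_dist_le G n y x.
Proof.
move=> [p [pp lp sp]]; elim: p n x pp lp sp => [|a p IH] n x /=.
  by move=> _ -> _; exists [::].
case/andP => axa pa la sn.
have n0 : (0 < n)%N by apply: leq_trans sn.
have d : cyc_dist_le G n.-1 y a by apply: IH => //; rewrite -ltnS prednK.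
have := dist_cat d (adj_dist (adj_sym axa)).
by rewrite addn1 prednK.
Qed.


Lemma coprime_dist (z a : gT) (p : nat) : prime p -> z \in 'Z(G) -> #[z] = p ->
  a \in G^# -> ~~ (p %| #[a])%N -> cyc_dist_le G 1 a z.
Proof.
move=> pr zZ oz aG npa.
have zG : z \in G by apply: (subsetP (center_sub G)).
have zG1 : z \in G^# by rewrite !inE zG andbT -order_gt1 oz prime_gt1.
have caz : commute a z.
  by case/centerP: zZ => _ /(_ a); move/setD1P: aG => [_ aG]; move/(_ aG).
have co : coprime #[a] #[z] by rewrite oz coprime_sym prime_coprime.
apply: (@dist_cyc <[a * z]>%G) => //; first exact: cycle_cyclic.
  by rewrite /= (cycleM caz co); have := mem_mulg (cycle_id a) (group1 <[z]>); rewrite mulg1.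
by rewrite /= (cycleM caz co); have := mem_mulg (group1 <[a]>) (cycle_id z); rewrite mul1g.
Qed.

Lemma claim (z w : gT) (p : nat) : prime p -> z \in 'Z(G) -> #[z] = p ->
  w \in G^# -> #[w] = p ->
  forall s a, a \in G -> w \in <[a]> -> path (cyc_adj G) a s -> last a s = z ->
  cyc_dist_le G 2 w z.
Proof.
move=> pr zZ oz wG ow.
have zG : z \in G by apply: (subsetP (center_sub G)).
have zG1 : z \in G^# by rewrite !inE zG andbT -order_gt1 oz prime_gt1.
elim=> [|a' s IH] a aG wa /=.
  move=> _ az; subst a; apply: dist_mono (_ : 1 <= 2)%N _ => //.
  exact: (@dist_cyc <[z]>%G) (cycle_cyclic z) wa (cycle_id z).
case/andP=> adj pth la.
have adj' := adj; case/and4P: adj' => aG1 a'G1 _ cC.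
set C := <<[set a; a']>> in cC.
have CG : C \subset G.
  rewrite gen_subG; apply/subsetP => t; rewrite !inE.
  by case/orP => /eqP ->; [exact: aG | by case/setD1P: a'G1].
have aC : a \in C by rewrite mem_gen // !inE eqxx.
have a'C : a' \in C by rewrite mem_gen // !inE eqxx orbT.
have wC : w \in C by apply: (subsetP _ _ wa); rewrite cycle_subG.
case: (boolP (z \in C)) => zC.
  case/cyclicP: cC => g Cg.
  have gG1 : g \in G^#.
    rewrite !inE -cycle_subG -Cg CG andbT; apply/eqP => g1.
    by move: zC; rewrite Cg g1 cycle1 inE => /eqP z1; move: zG1; rewrite z1 !inE eqxx.
  have -> : 2 = 1 + 1 by [].
  apply: (dist_cat (y:=g)).
    by apply: (@dist_cyc <[g]>%G) => //=; rewrite ?cycle_cyclic ?cycle_id // -Cg.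
  by apply: (@dist_cyc <[g]>%G) => //=; rewrite ?cycle_cyclic ?cycle_id // -Cg.
case: (boolP (p %| #[a'])%N) => pa'.
  apply: (IH a') => //; first by case/setD1P: a'G1.
  have [w' w'a ow'] := Cauchy pr (pa' : p %| #|<[a']>|)%N.
  have CG' : cyclic <<[set a; a']>>%G by [].
  have e : (<[w]>%G :==: <[w']>%G).
    rewrite (eq_subG_cyclic CG') /=.
    - by rewrite -!orderE ow ow'.
    - by rewrite cycle_subG.
    by rewrite cycle_subG; apply: (subsetP _ _ w'a); rewrite cycle_subG.
  move/eqP: e => e; have : w \in <[w']> by rewrite -e cycle_id.
  by apply: subsetP; rewrite cycle_subG.
have -> : 2 = 1 + 1 by [].
apply: (dist_cat (y:=a')).
  by apply: (@dist_cyc <<[set a; a']>>%G).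
exact: coprime_dist pr zZ oz a'G1 pa'.
Qed.
Lemma main_aux : cyc_graph_connected G -> cyc_diam_gt G 6 -> ('Z(G) = 1)%g.
Proof.
move=> conn [x [y [xG yG nd]]].
case: (eqVneq 'Z(G)%g 1%g) => // Zn1; exfalso.
set p := pdiv #|'Z(G)%g|.
have pr : prime p by apply: pdiv_prime; rewrite cardG_gt1.
have [z zZ oz] := Cauchy pr (pdiv_dvd _).
have zG : z \in G by apply: (subsetP (center_sub G)).
have zG1 : z \in G^# by rewrite !inE zG andbT -order_gt1 oz prime_gt1.
have key : forall t, t \in G^# -> cyc_dist_le G 3 t z.
  move=> t tG1; have tG : t \in G by case/setD1P: tG1.
  case: (boolP (p %| #[t])%N) => pt; last first.
    by apply: (dist_mono (_ : 1 <= 3)%N) => //; apply: (coprime_dist pr zZ oz tG1 pt).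
  have [w wt ow] := Cauchy pr (pt : p %| #|<[t]>|)%N.
  have wG1 : w \in G^#.
    rewrite !inE -order_gt1 ow prime_gt1 //=.
    by apply: (subsetP _ _ wt); rewrite cycle_subG.
  have -> : 3 = 1 + 2 by [].
  apply: (dist_cat (y:=w)).
    by apply: (@dist_cyc <[t]>%G) => //; rewrite ?cycle_cyclic ?cycle_id.
  have [n [s [ps ls _]]] := conn t z tG1 zG1.
  exact: (claim pr zZ oz wG1 ow tG wt ps ls).
by apply: nd; apply: (dist_cat (key x xG)); apply: dist_sym; apply: key.
Qed.

End Helpers.


Theorem lemma3p4 (gT : finGroupType) (G : {group gT}) :
  cyc_graph_connected G -> cyc_diam_gt G 6 -> ('Z(G) = 1)%g.
Proof. exact: main_aux. Qed.
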